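(* The axiom system $\mathbf{AX}^{lp}=\{\mathrm{Taut},\mathrm{MP},\mathrm{Ineq},E5,E6,E7,E8\}$ is sound and complete for $\mathcal{L}^E$ with respect to $\mathcal{M}^{lp}$: a formula of $\mathcal{L}^E$ is provable in $\mathbf{AX}^{lp}$ iff it is true in every lower probability structure.
   Context: Language $\mathcal L^E$: fix primitive propositions $\Phi_0$; propositional formulas built with $\neg,\wedge$; $\mathit{true}$ a tautology, $\mathit{false}=\neg\mathit{true}$. A propositional gamble is $b_1\phi_1+\cdots+b_n\phi_n$ (integers $b_i$); sums and integer multiples are formed termwise, $\phi$ identified with $1\phi$. Formulas are Boolean combinations of expectation inequalities $a_1e(\gamma_1)+\cdots+a_ke(\gamma_k)\ge b$ (integers $a_i,b$); $t\le b$ abbreviates $-t\ge-b$, $t>b$ abbreviates $\neg(t\le b)$, $t=b$ abbreviates $t\ge b\wedge t\le b$, $t_1\ge t_2$ abbreviates $t_1-t_2\ge0$. A lower probability structure is $M=(W,\mathcal F,\mathcal P,\pi)$: $W$ a nonempty set, $\mathcal F$ an algebra on $W$, $\mathcal P$ a set of probability measures on $\mathcal F$, $\pi$ a truth assignment to $\Phi_0$ at each world with every $\{w:\pi(w)(p)=\text{true}\}\in\mathcal F$; $[\![\phi]\!]_M$ is the set of worlds satisfying $\phi$, $[\![\sum b_i\phi_i]\!]_M=\sum b_iX_{[\![\phi_i]\!]_M}$, and $M\models\sum a_ie(\gamma_i)\ge b$ iff $\sum a_i\underline E_{\mathcal P}([\![\gamma_i]\!]_M)\ge b$ where $\underline E_{\mathcal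 P}(X)=\inf_{\mu\in\mathcal P}E_\mu(X)$; Boolean connectives classical. $\mathcal M^{lp}$ is the class of such structures. Axioms: Taut: all instances in $\mathcal L^E$ of propositional tautologies. MP: from $f$ and $f\Rightarrow g$ infer $g$. Ineq: all instances of valid formulas about linear inequalities, i.e. Boolean combinations of inequalities $c_1x_1+\cdots+c_nx_n\ge c$ true under every assignment of reals to the variables, with each variable $x_i$ uniformly replaced by a term $e(\gamma_i)$. E5: $e(\gamma_1)\le e(\gamma_2)$ whenever $\gamma_1\le\gamma_2$ is a valid gamble inequality, i.e. $[\![\gamma_1]\!]_M(w)\le[\![\gamma_2]\!]_M(w)$ for every nonempty set of worlds with truth assignment and every world $w$. E6: $e(\gamma_1+\gamma_2)\ge e(\gamma_1)+e(\gamma_2)$. E7: $e(a\gamma+b\,\mathit{true})=ae(\gamma)+b$ for $a\ge0$. E8: $e(a\gamma+b\,\mathit{false})=ae(\gamma)$ for $a\ge0$. *)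

(* Defs.v *)
From Stdlib Require Import Reals List ZArith.
Set Implicit Arguments.
Open Scope R_scope.

Record nelist (A : Type) := NE { ne_hd : A; ne_tl : list A }.
Arguments NE {A} _ _.
Definition ne_list {A} (l : nelist A) : list A := ne_hd l :: ne_tl l.
Definition ne_app {A} (l1 l2 : nelist A) : nelist A :=
  NE (ne_hd l1) (ne_tl l1 ++ ne_list l2).
Definition ne_map {A B} (f : A -> B) (l : nelist A) : nelist B :=
  NE (f (ne_hd l)) (map f (ne_tl l)).
Definition ne_one {A} (a : A) : nelist A := NE a nil.

Inductive pform (Phi0 : Type) : Type :=
| PAtom : Phi0 -> pform Phi0
| PNeg : pform Phi0 -> pform Phi0
| PAnd : pform Phi0 -> pform Phi0 -> pform Phi0.
Arguments PAtom {Phi0} _.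
Arguments PNeg {Phi0} _.
Arguments PAnd {Phi0} _ _.

Fixpoint peval {Phi0} (v : Phi0 -> bool) (phi : pform Phi0) : bool :=
  match phi with
  | PAtom p => v p
  | PNeg f => negb (peval v f)
  | PAnd f g => andb (peval v f) (peval v g)
  end.

(* a propositional tautology (used for the formula [true]) *)
Definition ptautology {Phi0} (phi : pform Phi0) : Prop :=
  forall v : Phi0 -> bool, peval v phi = true.

Definition gamble (Phi0 : Type) := nelist (Z * pform Phi0).
Definition gadd {Phi0} (g1 g2 : gamble Phi0) : gamble Phi0 := ne_app g1 g2.
Definition gscale {Phi0} (a : Z) (g : gamble Phi0) : gamble Phi0 :=
  ne_map (fun bp => ((a * fst bp)%Z, snd bp)) g.
Definition gterm {Phi0} (b : Z) (phi : pform Phi0) : gamble Phi0 := ne_one (b, phi).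

Definition gval {Phi0 W : Type} (pi : W -> Phi0 -> bool) (g : gamble Phi0) (w : W) : R :=
  fold_right (fun bp acc => IZR (fst bp) * (if peval (pi w) (snd bp) then 1 else 0) + acc)
    0 (ne_list g).

Definition gamble_le {Phi0} (g1 g2 : gamble Phi0) : Prop :=
  forall (W : Type) (pi : W -> Phi0 -> bool) (w : W), gval pi g1 w <= gval pi g2 w.

(* a term a1 e(g1) + ... + ak e(gk), k >= 1 *)
Definition term (Phi0 : Type) := nelist (Z * gamble Phi0).

Inductive formula (Phi0 : Type) : Type :=
| FGe : term Phi0 -> Z -> formula Phi0
| FNeg : formula Phi0 -> formula Phi0
| FAnd : formula Phi0 -> formula Phi0 -> formula Phi0.
Arguments FGe {Phi0} _ _.
Arguments FNeg {Phi0} _.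
Arguments FAnd {Phi0} _ _.

Definition fimp {Phi0} (f g : formula Phi0) : formula Phi0 := FNeg (FAnd f (FNeg g)).
Definition e {Phi0} (g : gamble Phi0) : term Phi0 := ne_one (1%Z, g).
Definition tneg {Phi0} (t : term Phi0) : term Phi0 :=
  ne_map (fun ag => ((- fst ag)%Z, snd ag)) t.
Definition tscale {Phi0} (a : Z) (t : term Phi0) : term Phi0 :=
  ne_map (fun ag => ((a * fst ag)%Z, snd ag)) t.
Definition tadd {Phi0} (t1 t2 : term Phi0) : term Phi0 := ne_app t1 t2.
Definition tsub {Phi0} (t1 t2 : term Phi0) : term Phi0 := tadd t1 (tneg t2).
Definition fle {Phi0} (t : term Phi0) (b : Z) : formula Phi0 := FGe (tneg t) (- b)%Z.
Definition feq {Phi0} (t : term Phi0) (b : Z) : formula Phi0 := FAnd (FGe t b) (fle t b).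
Definition fge2 {Phi0} (t1 t2 : term Phi0) : formula Phi0 := FGe (tsub t1 t2) 0%Z.

Inductive sform : Type :=
| SVar : nat -> sform
| SNeg : sform -> sform
| SAnd : sform -> sform -> sform.

Fixpoint seval (v : nat -> bool) (s : sform) : bool :=
  match s with
  | SVar n => v n
  | SNeg s => negb (seval v s)
  | SAnd s1 s2 => andb (seval v s1) (seval v s2)
  end.
Definition stautology (s : sform) : Prop := forall v, seval v s = true.

Fixpoint sinst {Phi0} (sigma : nat -> formula Phi0) (s : sform) : formula Phi0 :=
  match s with
  | SVar n => sigma n
  | SNeg s => FNeg (sinst sigma s)
  | SAnd s1 s2 => FAnd (sinst sigma s1) (sinst sigma s2)
  end.

Inductive lform : Type :=
| LGe : nelist (Z * nat) -> Z -> lform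
| LNeg : lform -> lform
| LAnd : lform -> lform -> lform.

Fixpoint leval (x : nat -> R) (l : lform) : Prop :=
  match l with
  | LGe t c => fold_right (fun ci acc => IZR (fst ci) * x (snd ci) + acc) 0 (ne_list t) >= IZR c
  | LNeg l => ~ leval x l
  | LAnd l1 l2 => leval x l1 /\ leval x l2
  end.
Definition lvalid (l : lform) : Prop := forall x : nat -> R, leval x l.

Fixpoint linst {Phi0} (sigma : nat -> gamble Phi0) (l : lform) : formula Phi0 :=
  match l with
  | LGe t c => FGe (ne_map (fun ci => (fst ci, sigma (snd ci))) t) c
  | LNeg l => FNeg (linst sigma l)
  | LAnd l1 l2 => FAnd (linst sigma l1) (linst sigma l2)
  end.

Inductive provable {Phi0} (tt : pform Phi0) : formula Phi0 -> Prop :=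
| Ax_Taut : forall s sigma, stautology s -> provable tt (sinst sigma s)
| Ax_Ineq : forall l sigma, lvalid l -> provable tt (linst sigma l)
| Ax_E5 : forall g1 g2, gamble_le g1 g2 -> provable tt (fge2 (e g2) (e g1))
| Ax_E6 : forall g1 g2, provable tt (fge2 (e (gadd g1 g2)) (tadd (e g1) (e g2)))
| Ax_E7 : forall (a b : Z) g, (0 <= a)%Z ->
    provable tt (feq (tsub (e (gadd (gscale a g) (gterm b tt))) (tscale a (e g))) b)
| Ax_E8 : forall (a b : Z) g, (0 <= a)%Z ->
    provable tt (feq (tsub (e (gadd (gscale a g) (gterm b (PNeg tt)))) (tscale a (e g))) 0)
| Rule_MP : forall f g, provable tt f -> provable tt (fimp f g) -> provable tt g.

(* subsets of W are predicates, taken up to extensional equality *)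
Definition seteq {W : Type} (A B : W -> Prop) : Prop := forall w, A w <-> B w.

Record algebra (W : Type) := {
  alg_mem : (W -> Prop) -> Prop;
  alg_ext : forall A B, seteq A B -> alg_mem A -> alg_mem B;
  alg_full : alg_mem (fun _ => True);
  alg_compl : forall A, alg_mem A -> alg_mem (fun w => ~ A w);
  alg_union : forall A B, alg_mem A -> alg_mem B -> alg_mem (fun w => A w \/ B w)
}.

Record prob_measure (W : Type) (F : algebra W) := {
  mu : (W -> Prop) -> R;
  mu_ext : forall A B, seteq A B -> mu A = mu B;
  mu_full : mu (fun _ => True) = 1;
  mu_nonneg : forall A, alg_mem F A -> 0 <= mu A;
  mu_add : forall A B, alg_mem F A -> alg_mem F B -> (forall w, A w -> B w -> False) ->
             mu (fun w => A w \/ B w) = mu A + mu B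
}.

Record lp_structure (Phi0 : Type) (W : Type) := {
  lp_W_ne : inhabited W;
  lp_F : algebra W;
  lp_P : prob_measure lp_F -> Prop;
  lp_P_ne : exists P, lp_P P;
  lp_pi : W -> Phi0 -> bool;
  lp_pi_meas : forall p, alg_mem lp_F (fun w => lp_pi w p = true)
}.

Definition is_expectation {W : Type} (m : (W -> Prop) -> R) (X : W -> R) (ex : R) : Prop :=
  exists vs : list R, NoDup vs /\ (forall w, In (X w) vs) /\
    ex = fold_right (fun v acc => v * m (fun w => X w = v) + acc) 0 vs.

Definition is_inf (S : R -> Prop) (l : R) : Prop :=
  (forall x, S x -> l <= x) /\ (forall m, (forall x, S x -> m <= x) -> m <= l).

Definition lower_exp {Phi0 W} (M : lp_structure Phi0 W) (X : W -> R) (l : R) : Prop :=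
  is_inf (fun ex => exists P, lp_P M P /\ is_expectation (mu P) X ex) l.

Definition gsem {Phi0 W} (M : lp_structure Phi0 W) (g : gamble Phi0) : W -> R :=
  gval (lp_pi M) g.

Fixpoint sat {Phi0 W} (M : lp_structure Phi0 W) (f : formula Phi0) : Prop :=
  match f with
  | FGe t b =>
      exists ls : list R,
        Forall2 (fun ag l => lower_exp M (gsem M (snd ag)) l) (ne_list t) ls /\
        fold_right (fun agl acc => IZR (fst (fst agl)) * snd agl + acc) 0
          (combine (ne_list t) ls) >= IZR b
  | FNeg f => ~ sat M f
  | FAnd f g => sat M f /\ sat M g
  end.

Definition lp_valid {Phi0} (f : formula Phi0) : Prop :=
  forall (W : Type) (M : lp_structure Phi0 W), sat M f.

(* Main.v *)
Require Import Defs.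
From Stdlib Require Import Reals List ZArith.
From Stdlib Require Import Lra Lia Classical ClassicalEpsilon FunctionalExtensionality.
Open Scope R_scope.
Ltac zs := repeat (rewrite ?Z.mul_1_r, ?Z.opp_involutive, ?opp_IZR, ?mult_IZR in * ).

Fixpoint sumR (n:nat) (f:nat->R) : R := match n with O => 0 | S n => sumR n f + f n end.

Lemma sumR_ext n f g : (forall i, (i<n)%nat -> f i = g i) -> sumR n f = sumR n g.
Proof. induction n; simpl; intros H; auto. rewrite IHn, H; auto; intros; apply H; lia. Qed.

Lemma sumR_plus n f g : sumR n (fun i => f i + g i) = sumR n f + sumR n g.
Proof. induction n; simpl; [lra|rewrite IHn; lra]. Qed.

Lemma sumR_scal n c f : sumR n (fun i => c * f i) = c * sumR n f.
Proof. induction n; simpl; [lra|rewrite IHn; lra]. Qed.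

Lemma sumR_0 n : sumR n (fun _ => 0) = 0.
Proof. induction n; simpl; [lra|rewrite IHn; lra]. Qed.

Lemma sumR_le n f g : (forall i, (i<n)%nat -> f i <= g i) -> sumR n f <= sumR n g.
Proof. induction n; simpl; intros H; [lra|]. assert (f n <= g n) by (apply H; lia).
 assert (sumR n f <= sumR n g) by (apply IHn; intros; apply H; lia). lra. Qed.

Lemma sumR_swap n m f : sumR n (fun i => sumR m (fun j => f i j)) = sumR m (fun j => sumR n (fun i => f i j)).
Proof. induction n; simpl. - rewrite sumR_0; auto. - rewrite IHn, <- sumR_plus; auto. Qed.

Lemma sumR_add k N f : sumR (k+N) f = sumR k f + sumR N (fun a => f (k+a)%nat).
Proof. induction N; simpl. - rewrite Nat.add_0_r; lra. - rewrite Nat.add_succ_r; simpl; rewrite IHN; lra. Qed.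

Lemma sumR_delta n j c : (j<n)%nat -> sumR n (fun i => if Nat.eqb i j then c i else 0) = c j.
Proof. induction n; simpl; intros H; [lia|].
 destruct (Nat.eqb_spec n j).
 - subst. rewrite sumR_ext with (g := fun _ => 0). rewrite sumR_0; lra.
   intros i Hi. destruct (Nat.eqb_spec i j); [lia|auto].
 - rewrite IHn; [lra|lia]. Qed.

Section SumL.
Context {A : Type}.
Definition sumL (l : list A) (f : A -> R) : R := fold_right (fun x acc => f x + acc) 0 l.

Lemma sumL_ext l f g : (forall x, In x l -> f x = g x) -> sumL l f = sumL l g.
Proof. induction l; simpl; intros H; auto. rewrite H, IHl; auto. Qed.
Lemma sumL_plus l f g : sumL l (fun x => f x + g x) = sumL l f + sumL l g.
Proof. induction l; simpl; [lra|rewrite IHl; lra]. Qed.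
Lemma sumL_scal l c f : sumL l (fun x => c * f x) = c * sumL l f.
Proof. induction l; simpl; [lra|rewrite IHl; lra]. Qed.
Lemma sumL_0 l : sumL l (fun _ => 0) = 0.
Proof. induction l; simpl; [lra|rewrite IHl; lra]. Qed.
Lemma sumL_le l f g : (forall x, In x l -> f x <= g x) -> sumL l f <= sumL l g.
Proof. induction l; simpl; intros H; [lra|].
 assert (f a <= g a) by auto. assert (sumL l f <= sumL l g) by auto. lra. Qed.
Lemma sumL_nonneg l f : (forall x, In x l -> 0 <= f x) -> 0 <= sumL l f.
Proof. intros H. rewrite <- (sumL_0 l). apply sumL_le; auto. Qed.
Lemma sumL_sumR l n f : sumL l (fun x => sumR n (fun i => f x i)) = sumR n (fun i => sumL l (fun x => f x i)).
Proof. induction l; simpl. - rewrite sumR_0; auto. - rewrite IHl, <- sumR_plus; auto. Qed.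
Lemma sumL_app l1 l2 f : sumL (l1 ++ l2) f = sumL l1 f + sumL l2 f.
Proof. induction l1; simpl; [lra|rewrite IHl1; lra]. Qed.
Lemma sumL_delta (dec : forall x y : A, {x = y} + {x <> y}) l t h :
  NoDup l -> In t l -> sumL l (fun u => if dec u t then h u else 0) = h t.
Proof. induction l; simpl; intros Hn Hi; [contradiction|]. inversion Hn; subst.
 destruct (dec a t).
 - subst. rewrite sumL_ext with (g := fun _ => 0). rewrite sumL_0; lra.
   intros x Hx. destruct (dec x t); [subst; contradiction|auto].
 - destruct Hi as [Hi|Hi]; [congruence|]. rewrite IHl; auto; lra. Qed.
End SumL.

Lemma sumL_swap {A B} (l1 : list A) (l2 : list B) f :
  sumL l1 (fun x => sumL l2 (fun y => f x y)) = sumL l2 (fun y => sumL l1 (fun x => f x y)).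
Proof. induction l1; simpl. - rewrite sumL_0; auto. - rewrite IHl1, <- sumL_plus; auto. Qed.

Section G.
Context {Phi0 : Type}.
Definition gvalu (u : Phi0 -> bool) (g : gamble Phi0) : R :=
  fold_right (fun bp acc => IZR (fst bp) * (if peval u (snd bp) then 1 else 0) + acc) 0 (ne_list g).
Lemma gval_gvalu W (pi : W -> Phi0 -> bool) g w : gval pi g w = gvalu (pi w) g.
Proof. reflexivity. Qed.
Definition gpf (g : gamble Phi0) := map snd (ne_list g).

Lemma gvalu_ext u u' g : (forall p, In p (gpf g) -> peval u p = peval u' p) -> gvalu u g = gvalu u' g.
Proof. unfold gvalu, gpf. induction (ne_list g); simpl; intros H; auto.
 rewrite H by auto. rewrite IHl; auto. Qed.

Lemma ne_list_app {A} (l1 l2 : nelist A) : ne_list (ne_app l1 l2) = ne_list l1 ++ ne_list l2.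
Proof. reflexivity. Qed.
Lemma ne_list_map {A B} (f : A -> B) l : ne_list (ne_map f l) = map f (ne_list l).
Proof. reflexivity. Qed.

Lemma gvalu_add u g h : gvalu u (gadd g h) = gvalu u g + gvalu u h.
Proof. unfold gvalu, gadd. rewrite ne_list_app, fold_right_app.
 generalize (ne_list g) (ne_list h). intros l1 l2. induction l1; simpl; [lra|].
 rewrite IHl1; lra. Qed.

Lemma gvalu_scale u a g : gvalu u (gscale a g) = IZR a * gvalu u g.
Proof. unfold gvalu, gscale. rewrite ne_list_map. induction (ne_list g); simpl; [lra|].
 rewrite IHl, mult_IZR. lra. Qed.

Lemma gvalu_term u b p : gvalu u (gterm b p) = IZR b * (if peval u p then 1 else 0).
Proof. unfold gvalu; simpl. lra. Qed.

Lemma gpf_add g h : gpf (gadd g h) = gpf g ++ gpf h.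
Proof. unfold gpf, gadd. rewrite ne_list_app, map_app. auto. Qed.
Lemma gpf_scale a g : gpf (gscale a g) = gpf g.
Proof. unfold gpf, gscale. rewrite ne_list_map, map_map. auto. Qed.
Lemma gpf_term b p : gpf (gterm b p) = p :: nil.
Proof. reflexivity. Qed.
End G.

Fixpoint allbools (m : nat) : list (list bool) :=
  match m with O => nil :: nil
  | S m => map (cons true) (allbools m) ++ map (cons false) (allbools m) end.

Lemma allbools_in l : In l (allbools (length l)).
Proof. induction l; simpl; auto. apply in_or_app. destruct a; [left|right]; apply in_map; auto. Qed.

Lemma allbools_nodup m : NoDup (allbools m).
Proof. induction m; simpl. constructor; auto; constructor.
 apply NoDup_app.
 - apply NoDup_map_NoDup_ForallPairs; auto. intros x y _ _ H; injection H; auto.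
 - apply NoDup_map_NoDup_ForallPairs; auto. intros x y _ _ H; injection H; auto.
 - intros x H1 H2. apply in_map_iff in H1. apply in_map_iff in H2.
   destruct H1 as [? [<- _]]. destruct H2 as [? [H _]]. discriminate.
Qed.

Lemma map_eq_in {A B} (f g : A -> B) l x : map f l = map g l -> In x l -> f x = g x.
Proof. induction l; simpl; intros H Hi; [contradiction|]. injection H; intros.
 destruct Hi; subst; auto. Qed.

Section Alg.
Context {W : Type} (F : algebra W).
Lemma alg_empty : alg_mem F (fun _ => False).
Proof. eapply alg_ext; [|apply alg_compl, alg_full]. intros w; tauto. Qed.
Lemma alg_inter A B : alg_mem F A -> alg_mem F B -> alg_mem F (fun w => A w /\ B w).
Proof. intros HA HB. eapply alg_ext; [|apply alg_compl, alg_union; apply alg_compl; [exact HA|exact HB]].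
 intros w; cbv beta; split; [|tauto]. intros H. split; apply NNPP; tauto. Qed.
End Alg.

Lemma mu_empty {W} {F : algebra W} (P : prob_measure F) : mu P (fun _ => False) = 0.
Proof. pose proof (mu_add P (fun _ => False) (fun _ => False) (alg_empty F) (alg_empty F)) as H.
 assert (E : mu P (fun w => False \/ False) = mu P (fun _ => False)) by (apply mu_ext; intro; tauto).
 assert (mu P (fun w => False \/ False) = mu P (fun _ => False) + mu P (fun _ => False)) by (apply H; auto).
 clear H. lra. Qed.

Section Repr.
Context {Phi0 W : Type} (M : lp_structure Phi0 W) (Phi : list (pform Phi0)).

Definition pat (w : W) : list bool := map (fun p => peval (lp_pi M w) p) Phi.
Definition AB := allbools (length Phi).
Lemma pat_in w : In (pat w) AB.
Proof. unfold AB, pat. rewrite <- (length_map (fun p => peval (lp_pi M w) p) Phi). apply allbools_in. Qed.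

Lemma meas_pf p : alg_mem (lp_F M) (fun w => peval (lp_pi M w) p = true).
Proof. induction p; simpl.
 - apply lp_pi_meas.
 - eapply alg_ext; [|apply alg_compl, IHp]. intros w. destruct (peval _ p); simpl; intuition congruence.
 - eapply alg_ext; [|apply alg_inter; [apply IHp1|apply IHp2]]. intros w.
   destruct (peval _ p1), (peval _ p2); simpl; intuition congruence.
Qed.

Lemma meas_pfb p b : alg_mem (lp_F M) (fun w => peval (lp_pi M w) p = b).
Proof. destruct b. apply meas_pf. eapply alg_ext; [|apply alg_compl, (meas_pf p)].
 intros w; cbv beta. destruct (peval _ p); split; intros H; try congruence; exfalso; auto. Qed.

Lemma meas_pat_gen (L : list (pform Phi0)) beta :
  alg_mem (lp_F M) (fun w => map (fun p => peval (lp_pi M w) p) L = beta).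
Proof. revert beta; induction L; intros beta; simpl.
 - destruct beta. eapply alg_ext; [|apply alg_full]. intros; cbv beta; split; auto.
   eapply alg_ext; [|apply alg_empty]. intros; cbv beta; split; [tauto|discriminate].
 - destruct beta as [|b beta].
   + eapply alg_ext; [|apply alg_empty]. intros; cbv beta; split; [tauto|discriminate].
   + eapply alg_ext; [|apply alg_inter; [apply (meas_pfb a b)|apply (IHL beta)]].
     intros w; cbv beta; split; [intros [? ?]; subst; auto|intros H; injection H; auto].
Qed.

Lemma meas_pat beta : alg_mem (lp_F M) (fun w => pat w = beta).
Proof. apply meas_pat_gen. Qed.

Lemma meas_patL L : alg_mem (lp_F M) (fun w => In (pat w) L).
Proof. induction L; simpl. apply alg_empty.
 eapply alg_ext; [|apply alg_union; [apply (meas_pat a)|apply IHL]]. intros w; cbv beta; simpl; split; intros [H|H]; auto. Qed.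

Lemma mu_patL (P : prob_measure (lp_F M)) L : NoDup L ->
  mu P (fun w => In (pat w) L) = sumL L (fun beta => mu P (fun w => pat w = beta)).
Proof. induction L; simpl; intros Hn. apply mu_empty. inversion Hn; subst.
 rewrite (mu_ext P (A := fun w => a = pat w \/ In (pat w) L) (B := fun w => pat w = a \/ In (pat w) L)) by (intros w; simpl; intuition).
 rewrite mu_add; [rewrite IHL; auto| apply meas_pat | apply meas_patL |].
 intros w Hw1 Hw2. rewrite Hw1 in Hw2. contradiction. Qed.

Lemma mu_pat_nonneg (P : prob_measure (lp_F M)) beta : 0 <= mu P (fun w => pat w = beta).
Proof. apply mu_nonneg, meas_pat. Qed.

Lemma mu_pat_sum (P : prob_measure (lp_F M)) : sumL AB (fun beta => mu P (fun w => pat w = beta)) = 1.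
Proof. rewrite <- mu_patL by apply allbools_nodup. rewrite <- (mu_full P). apply mu_ext.
 intros w; split; auto; intros; apply pat_in. Qed.

Definition rep (beta : list bool) : W := epsilon (lp_W_ne M) (fun w => pat w = beta).
Lemma rep_pat w : pat (rep (pat w)) = pat w.
Proof. unfold rep. apply (epsilon_spec (lp_W_ne M) (fun w' => pat w' = pat w)). eauto. Qed.

Definition determined (X : W -> R) := forall w w', pat w = pat w' -> X w = X w'.

Definition EX (P : prob_measure (lp_F M)) (X : W -> R) : R :=
  sumL AB (fun beta => mu P (fun w => pat w = beta) * X (rep beta)).

Lemma sumL_filter {A} (l : list A) (c : A -> bool) h :
  sumL (filter c l) h = sumL l (fun x => if c x then h x else 0).
Proof. induction l; simpl; auto. destruct (c a); simpl; rewrite IHl; lra. Qed.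

Lemma mu_pat_empty (P : prob_measure (lp_F M)) beta : (forall w, pat w <> beta) -> mu P (fun w => pat w = beta) = 0.
Proof. intros H. rewrite (mu_ext P (A := fun w => pat w = beta) (B := fun _ => False)). apply mu_empty. intros w; split; [apply H|tauto]. Qed.

Lemma expect_compute (P : prob_measure (lp_F M)) X vs : determined X -> NoDup vs -> (forall w, In (X w) vs) ->
  fold_right (fun v acc => v * mu P (fun w => X w = v) + acc) 0 vs = EX P X.
Proof. intros HX Hn Hc.
 set (c v := fun beta : list bool => if Req_EM_T (X (rep beta)) v then true else false).
 assert (E1 : forall v, mu P (fun w => X w = v) = sumL AB (fun beta => if c v beta then mu P (fun w => pat w = beta) else 0)).
 { intros v. rewrite <- sumL_filter. rewrite <- mu_patL by (apply NoDup_filter, allbools_nodup).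
   apply mu_ext. intros w. rewrite filter_In. unfold c.
   assert (HR : X (rep (pat w)) = X w) by (apply HX, rep_pat).
   split.
   - intros <-. split; [apply pat_in|]. destruct (Req_EM_T _ _); auto.
   - intros [_ H]. destruct (Req_EM_T _ _); [congruence|discriminate]. }
 change (sumL vs (fun v => v * mu P (fun w => X w = v)) = EX P X).
 rewrite (sumL_ext vs _ (fun v => sumL AB (fun beta => v * (if c v beta then mu P (fun w => pat w = beta) else 0)))).
 2:{ intros v _. rewrite E1, sumL_scal. auto. }
 rewrite sumL_swap. unfold EX. apply sumL_ext. intros beta Hb.
 destruct (classic (exists w, pat w = beta)) as [[w Hw]|Hne].
 - rewrite (sumL_ext vs _ (fun v => if Req_EM_T v (X (rep beta)) then mu P (fun w => pat w = beta) * v else 0)).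
   + rewrite (sumL_delta Req_EM_T); auto.
   + intros v _. unfold c. destruct (Req_EM_T (X (rep beta)) v), (Req_EM_T v (X (rep beta))); subst; try lra; congruence.
 - rewrite mu_pat_empty by (intros w Hw; apply Hne; eauto). rewrite Rmult_0_l.
   transitivity (sumL vs (fun _ : R => 0)); [|apply sumL_0]. apply sumL_ext. intros v _. destruct (c v beta); lra.
Qed.

Lemma expect_repr (P : prob_measure (lp_F M)) X ex : determined X ->
  is_expectation (mu P) X ex <-> ex = EX P X.
Proof. intros HX. split.
 - intros [vs [Hn [Hc ->]]]. apply expect_compute; auto.
 - intros ->. exists (nodup Req_EM_T (map (fun beta => X (rep beta)) AB)). split; [apply NoDup_nodup|split].
   + intros w. apply nodup_In. apply in_map_iff. exists (pat w). split; [apply HX, rep_pat| apply pat_in].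
   + symmetry. apply expect_compute; auto. apply NoDup_nodup.
     intros w. apply nodup_In. apply in_map_iff. exists (pat w). split; [apply HX, rep_pat| apply pat_in].
Qed.

Lemma EX_le P X Y : (forall w, X w <= Y w) -> EX P X <= EX P Y.
Proof. intros H. unfold EX. apply sumL_le. intros b _. apply Rmult_le_compat_l; auto. apply mu_pat_nonneg. Qed.

Lemma EX_lin P X Y a b : EX P (fun w => a * X w + b * Y w) = a * EX P X + b * EX P Y.
Proof. unfold EX. rewrite <- !sumL_scal, <- sumL_plus. apply sumL_ext. intros; lra. Qed.

Lemma EX_const P c : EX P (fun _ => c) = c.
Proof. unfold EX. rewrite (sumL_ext _ _ (fun beta => c * mu P (fun w => pat w = beta))) by (intros; lra).
 rewrite sumL_scal, mu_pat_sum. lra. Qed.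

Lemma EX_ext P X Y : (forall w, X w = Y w) -> EX P X = EX P Y.
Proof. intros H. unfold EX. apply sumL_ext. intros; rewrite H; auto. Qed.

End Repr.

Lemma inf_exists (S : R -> Prop) : (exists x, S x) -> (exists lb, forall x, S x -> lb <= x) -> exists l, is_inf S l.
Proof. intros [x0 Hx0] [lb Hlb].
 destruct (completeness (fun y => S (- y))) as [m [Hm1 Hm2]].
 - exists (- lb). intros y Hy. specialize (Hlb _ Hy). lra.
 - exists (- x0). rewrite Ropp_involutive. auto.
 - exists (- m). split.
   + intros x Hx. assert (-x <= m) by (apply Hm1; rewrite Ropp_involutive; auto). lra.
   + intros m' Hm'. assert (m <= - m'). { apply Hm2. intros y Hy. specialize (Hm' _ Hy). lra. } lra.
Qed.

Lemma inf_unique S l1 l2 : is_inf S l1 -> is_inf S l2 -> l1 = l2.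
Proof. intros [H1 H1'] [H2 H2']. apply Rle_antisym; auto. Qed.

Lemma inf_ext (S S' : R -> Prop) l : (forall x, S x <-> S' x) -> is_inf S l -> is_inf S' l.
Proof. intros H [H1 H2]. split. intros x Hx; apply H1, H; auto. intros m Hm; apply H2; intros; apply Hm, H; auto. Qed.

Section InfFam.
Context {T : Type} (Q : T -> Prop).
Definition fam (f : T -> R) := fun ex => exists P, Q P /\ ex = f P.
Lemma inf_mono f h l1 l2 : is_inf (fam f) l1 -> is_inf (fam h) l2 -> (forall P, Q P -> f P <= h P) -> l1 <= l2.
Proof. intros [A1 B1] [A2 B2] H. apply B2. intros x [P [HP ->]].
 apply Rle_trans with (f P); auto. apply A1; exists P; auto. Qed.
Lemma inf_super f1 f2 f3 l1 l2 l3 : is_inf (fam f1) l1 -> is_inf (fam f2) l2 -> is_inf (fam f3) l3 ->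
  (forall P, Q P -> f1 P + f2 P <= f3 P) -> l1 + l2 <= l3.
Proof. intros [A1 B1] [A2 B2] [A3 B3] H. apply B3. intros x [P [HP ->]].
 assert (l1 <= f1 P) by (apply A1; exists P; auto). assert (l2 <= f2 P) by (apply A2; exists P; auto).
 specialize (H P HP). lra. Qed.
Lemma inf_affine f1 f2 l1 l2 a b : (exists P, Q P) -> 0 <= a -> is_inf (fam f1) l1 -> is_inf (fam f2) l2 ->
  (forall P, Q P -> f2 P = a * f1 P + b) -> l2 = a * l1 + b.
Proof. intros [P0 HP0] Ha [A1 B1] [A2 B2] H. apply Rle_antisym.
 - destruct (Req_dec a 0) as [Ha0|Ha0].
   + subst. apply A2. exists P0. split; auto. rewrite H; auto; lra.
   + assert (l1 >= (l2 - b) / a). { apply Rle_ge, B1. intros x [P [HP ->]].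
       assert (l2 <= f2 P) by (apply A2; exists P; auto). rewrite H in H0 by auto.
       apply Rmult_le_reg_l with a. lra. field_simplify; lra. }
     assert (a * l1 >= a * ((l2 - b) / a)) by (apply Rle_ge, Rmult_le_compat_l; lra).
     field_simplify in H1; lra.
 - apply B2. intros x [P [HP ->]]. rewrite H by auto.
   assert (l1 <= f1 P) by (apply A1; exists P; auto). nra.
Qed.
End InfFam.

Definition gabs {Phi0} (g : gamble Phi0) : R := fold_right (fun bp acc => Rabs (IZR (fst bp)) + acc) 0 (ne_list g).
Lemma gvalu_lb {Phi0} u (g : gamble Phi0) : - gabs g <= gvalu u g.
Proof. unfold gvalu, gabs. induction (ne_list g); simpl; [lra|].
 assert (- Rabs (IZR (fst a)) <= IZR (fst a) * (if peval u (snd a) then 1 else 0)).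
 { destruct (peval u (snd a)); [rewrite Rmult_1_r|rewrite Rmult_0_r]; pose proof (Rabs_pos (IZR (fst a))); pose proof (Rle_abs (- IZR (fst a))); rewrite Rabs_Ropp in *; lra. }
 lra. Qed.

Section LE.
Context {Phi0 W : Type} (M : lp_structure Phi0 W).

Definition ES (X : W -> R) := fun ex => exists P, lp_P M P /\ is_expectation (mu P) X ex.

Lemma determined_g Phi g : incl (gpf g) Phi -> determined M Phi (gsem M g).
Proof. intros Hi w w' Hp. unfold gsem. rewrite !gval_gvalu. apply gvalu_ext.
 intros p Hp'. apply (map_eq_in _ _ Phi p Hp). apply Hi; auto. Qed.

Lemma ES_char Phi g : incl (gpf g) Phi -> forall ex, ES (gsem M g) ex <-> fam (lp_P M) (fun P => EX M Phi P (gsem M g)) ex.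
Proof. intros Hi ex. unfold ES, fam. split; intros [P [HP H]]; exists P; split; auto.
 - apply (expect_repr M Phi P (gsem M g) ex); auto. apply determined_g; auto.
 - apply (expect_repr M Phi P (gsem M g) ex); auto. apply determined_g; auto. Qed.

Lemma lower_exists g : exists l, lower_exp M (gsem M g) l.
Proof. unfold lower_exp. apply inf_exists.
 - destruct (lp_P_ne M) as [P HP]. exists (EX M (gpf g) P (gsem M g)).
   apply (ES_char (gpf g) g (incl_refl _)). exists P; auto.
 - exists (- gabs g). intros x Hx. apply (ES_char (gpf g) g (incl_refl _)) in Hx.
   destruct Hx as [P [HP ->]]. rewrite <- (EX_const M (gpf g) P (- gabs g)).
   apply EX_le. intros w. unfold gsem; rewrite gval_gvalu. apply gvalu_lb.
Qed.

Definition LE (g : gamble Phi0) : R := epsilon (inhabits 0) (fun l => lower_exp M (gsem M g) l).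
Lemma LE_spec g : lower_exp M (gsem M g) (LE g).
Proof. unfold LE. apply epsilon_spec. apply lower_exists. Qed.
Lemma LE_unique g l : lower_exp M (gsem M g) l -> l = LE g.
Proof. intros H. eapply inf_unique; eauto. apply LE_spec. Qed.
Lemma LE_char Phi g : incl (gpf g) Phi -> is_inf (fam (lp_P M) (fun P => EX M Phi P (gsem M g))) (LE g).
Proof. intros Hi. eapply inf_ext; [|apply LE_spec]. apply ES_char; auto. Qed.
End LE.

Definition evalT {Phi0} (V : gamble Phi0 -> R) (t : term Phi0) : R :=
  fold_right (fun ag acc => IZR (fst ag) * V (snd ag) + acc) 0 (ne_list t).
Fixpoint evalF {Phi0} (V : gamble Phi0 -> R) (f : formula Phi0) : Prop :=
  match f with
  | FGe t b => evalT V t >= IZR b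
  | FNeg f => ~ evalF V f
  | FAnd f g => evalF V f /\ evalF V g
  end.

Lemma sat_FGe_aux {Phi0 W} (M : lp_structure Phi0 W) (l : list (Z * gamble Phi0)) b :
  (exists ls : list R, Forall2 (fun (ag : Z * gamble Phi0) l => lower_exp M (gsem M (snd ag)) l) l ls /\
     fold_right (fun agl acc => IZR (fst (fst agl)) * snd agl + acc) 0 (combine l ls) >= IZR b) <->
  fold_right (fun (ag : Z * gamble Phi0) acc => IZR (fst ag) * LE M (snd ag) + acc) 0 l >= IZR b.
Proof.
 assert (Hc : forall l ls, Forall2 (fun (ag : Z * gamble Phi0) l => lower_exp M (gsem M (snd ag)) l) l ls -> ls = map (fun ag : Z * gamble Phi0 => LE M (snd ag)) l).
 { intros l0 ls H; induction H; simpl; auto. f_equal; auto. apply LE_unique; auto. }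
 assert (Hf : forall l : list (Z * gamble Phi0), fold_right (fun agl acc => IZR (fst (fst agl)) * snd agl + acc) 0
             (combine l (map (fun ag : Z * gamble Phi0 => LE M (snd ag)) l)) = fold_right (fun (ag : Z * gamble Phi0) acc => IZR (fst ag) * LE M (snd ag) + acc) 0 l).
 { induction l0; simpl; auto. rewrite IHl0; auto. }
 split.
 - intros [ls [H1 H2]]. apply Hc in H1. subst. rewrite <- Hf. exact H2.
 - intros H. exists (map (fun ag : Z * gamble Phi0 => LE M (snd ag)) l). split.
   + clear H. induction l; simpl; constructor; auto. apply LE_spec.
   + rewrite Hf; auto.
Qed.

Lemma sat_evalF {Phi0 W} (M : lp_structure Phi0 W) f : sat M f <-> evalF (LE M) f.
Proof. induction f.
 - exact (sat_FGe_aux M (ne_list t) z).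
 - simpl. rewrite IHf; tauto.
 - simpl. rewrite IHf1, IHf2; tauto.
Qed.

Lemma evalF_sinst {Phi0} V (sigma : nat -> formula Phi0) s :
  evalF V (sinst sigma s) <-> seval (fun n => if excluded_middle_informative (evalF V (sigma n)) then true else false) s = true.
Proof. induction s; simpl.
 - destruct (excluded_middle_informative _); split; auto; discriminate.
 - rewrite IHs. destruct (seval _ s); simpl; split; auto; try discriminate; congruence.
 - rewrite IHs1, IHs2. destruct (seval _ s1), (seval _ s2); simpl; intuition discriminate.
Qed.

Lemma evalT_lin {Phi0} V (sigma : nat -> gamble Phi0) (t : nelist (Z * nat)) :
  evalT V (ne_map (fun ci => (fst ci, sigma (snd ci))) t) =
  fold_right (fun ci acc => IZR (fst ci) * V (sigma (snd ci)) + acc) 0 (ne_list t).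
Proof. unfold evalT. rewrite ne_list_map. induction (ne_list t); simpl; auto. rewrite IHl; auto. Qed.

Lemma evalF_linst {Phi0} V (sigma : nat -> gamble Phi0) l :
  evalF V (linst sigma l) <-> leval (fun i => V (sigma i)) l.
Proof. induction l; simpl.
 - rewrite evalT_lin. tauto.
 - rewrite IHl; tauto.
 - rewrite IHl1, IHl2; tauto.
Qed.

Section Sound.
Context {Phi0 : Type} (tt : pform Phi0) (Htt : ptautology tt).

Lemma gsem_eq {W} (M : lp_structure Phi0 W) g w : gsem M g w = gvalu (lp_pi M w) g.
Proof. reflexivity. Qed.

Lemma LE_mono {W} (M : lp_structure Phi0 W) g1 g2 : gamble_le g1 g2 -> LE M g1 <= LE M g2.
Proof. intros H. set (Phi := gpf g1 ++ gpf g2).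
 apply (inf_mono (lp_P M) (fun P => EX M Phi P (gsem M g1)) (fun P => EX M Phi P (gsem M g2))).
 apply LE_char; unfold Phi; intros x Hx; apply in_or_app; auto.
 apply LE_char; unfold Phi; intros x Hx; apply in_or_app; auto.
 intros P _. apply EX_le. intros w. rewrite !gsem_eq.
 exact (H unit (fun _ => lp_pi M w) Datatypes.tt). Qed.

Lemma LE_super {W} (M : lp_structure Phi0 W) g1 g2 : LE M g1 + LE M g2 <= LE M (gadd g1 g2).
Proof. set (Phi := gpf g1 ++ gpf g2).
 apply (inf_super (lp_P M) (fun P => EX M Phi P (gsem M g1)) (fun P => EX M Phi P (gsem M g2)) (fun P => EX M Phi P (gsem M (gadd g1 g2)))).
 apply LE_char; unfold Phi; intros x Hx; apply in_or_app; auto.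
 apply LE_char; unfold Phi; intros x Hx; apply in_or_app; auto.
 apply LE_char; unfold Phi; rewrite gpf_add; intros x Hx; auto.
 intros P _. rewrite (EX_ext M Phi P (gsem M (gadd g1 g2)) (fun w => 1 * gsem M g1 w + 1 * gsem M g2 w)).
 rewrite EX_lin. lra. intros w. rewrite !gsem_eq, gvalu_add. lra. Qed.

Lemma LE_affine {W} (M : lp_structure Phi0 W) (a b : Z) g p : (0 <= a)%Z ->
  (forall u, peval u p = true) \/ (b = 0%Z) ->
  LE M (gadd (gscale a g) (gterm b p)) = IZR a * LE M g + IZR b.
Proof. intros Ha Hp. set (Phi := gpf g ++ p :: nil).
 apply (inf_affine (lp_P M) (fun P => EX M Phi P (gsem M g)) (fun P => EX M Phi P (gsem M (gadd (gscale a g) (gterm b p))))).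
 apply lp_P_ne. apply IZR_le; auto.
 apply LE_char; unfold Phi; intros x Hx; apply in_or_app; auto.
 apply LE_char; unfold Phi; rewrite gpf_add, gpf_scale, gpf_term; intros x Hx; auto.
 intros P _. rewrite (EX_ext M Phi P _ (fun w => IZR a * gsem M g w + IZR b * (fun _ => 1) w)).
 rewrite EX_lin, EX_const. lra. intros w. rewrite !gsem_eq, gvalu_add, gvalu_scale, gvalu_term.
 destruct Hp as [Hp|Hp]. rewrite Hp. lra. subst. lra. Qed.


Theorem soundness_eval f : provable tt f -> forall W (M : lp_structure Phi0 W), evalF (LE M) f.
Proof. induction 1; intros W M.
 - apply evalF_sinst. apply H.
 - apply evalF_linst. apply H.
 - unfold fge2; simpl; unfold evalT; simpl. pose proof (LE_mono M g1 g2 H). lra.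
 - unfold fge2; simpl; unfold evalT; simpl. pose proof (LE_super M g1 g2). lra.
 - unfold feq, fle; simpl; unfold evalT; simpl.
   pose proof (LE_affine M a b g tt H (or_introl Htt)). zs. lra.
 - unfold feq, fle; simpl; unfold evalT; simpl.
   assert (E : LE M (gadd (gscale a g) (gterm b (PNeg tt))) = LE M (gadd (gscale a g) (gterm 0 (PNeg tt)))).
   { apply Rle_antisym; apply LE_mono; intros W' pi w; rewrite !gval_gvalu, !gvalu_add, !gvalu_term;
     simpl; rewrite Htt; simpl; lra. }
   pose proof (LE_affine M a 0 g (PNeg tt) H (or_intror eq_refl)). zs. lra.
 - specialize (IHprovable1 W M). specialize (IHprovable2 W M). simpl in IHprovable2.
   apply NNPP. tauto.
Qed.
End Sound.

Section LinCons.
Context {Phi0 : Type} (tt : pform Phi0).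

Fixpoint gmbF (f : formula Phi0) : list (gamble Phi0) :=
  match f with
  | FGe t _ => map snd (ne_list t)
  | FNeg f => gmbF f
  | FAnd f g => gmbF f ++ gmbF g
  end.

Fixpoint gdef (f : formula Phi0) : gamble Phi0 :=
  match f with FGe t _ => snd (ne_hd t) | FNeg f => gdef f | FAnd f _ => gdef f end.

Definition deqg (g h : gamble Phi0) : {g = h} + {g <> h} := excluded_middle_informative (g = h).

Fixpoint findi (l : list (gamble Phi0)) (g : gamble Phi0) : nat :=
  match l with nil => 0%nat | h :: l => if deqg h g then 0%nat else S (findi l g) end.

Lemma findi_nth l g d : In g l -> nth (findi l g) l d = g.
Proof. induction l; simpl; intros H; [contradiction|]. destruct (deqg a g); auto.
 destruct H; [congruence|auto]. Qed.

Variable O : list (gamble Phi0).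
Variable g0 : gamble Phi0.
Definition sigmaO (i : nat) := nth i O g0.
Definition idx (g : gamble Phi0) := findi O g.

Fixpoint lconv (f : formula Phi0) : lform :=
  match f with
  | FGe t b => LGe (ne_map (fun ag => (fst ag, idx (snd ag))) t) b
  | FNeg f => LNeg (lconv f)
  | FAnd f g => LAnd (lconv f) (lconv g)
  end.

Lemma linst_lconv f : (forall g, In g (gmbF f) -> In g O) -> linst sigmaO (lconv f) = f.
Proof. induction f; simpl; intros H.
 - f_equal. destruct t as [hd tl]. unfold ne_map; simpl. f_equal.
   + destruct hd as [a g]; simpl. unfold sigmaO, idx. rewrite findi_nth; auto.
   + rewrite map_map. rewrite <- (map_id tl) at 2. apply map_ext_in. intros [a g] Hi; simpl.
     unfold sigmaO, idx. rewrite findi_nth; auto. apply H; simpl; right. apply in_map_iff. exists (a, g); auto.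
 - rewrite IHf; auto.
 - rewrite IHf1, IHf2; auto; intros; apply H; apply in_or_app; auto.
Qed.

Lemma leval_lconv x f : leval x (lconv f) <-> evalF (fun g => x (idx g)) f.
Proof. induction f.
 - assert (E : forall l0 : list (Z * gamble Phi0), fold_right (fun ci acc => IZR (fst ci) * x (snd ci) + acc) 0
        (map (fun ag : Z * gamble Phi0 => (fst ag, idx (snd ag))) l0) =
        fold_right (fun ag acc => IZR (fst ag) * x (idx (snd ag)) + acc) 0 l0).
   { induction l0; simpl; auto. rewrite IHl0; auto. }
   change (fold_right (fun ci acc => IZR (fst ci) * x (snd ci) + acc) 0 (map (fun ag : Z * gamble Phi0 => (fst ag, idx (snd ag))) (ne_list t)) >= IZR z <-> evalT (fun g => x (idx g)) t >= IZR z).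
   rewrite E. unfold evalT. tauto.
 - simpl. rewrite IHf; tauto.
 - simpl. rewrite IHf1, IHf2; tauto.
Qed.

Definition limp (p q : lform) := LNeg (LAnd p (LNeg q)).
Definition Lchain (prems : list (formula Phi0)) (c : formula Phi0) :=
  fold_right (fun F acc => limp (lconv F) acc) (lconv c) prems.

Lemma linst_chain prems c : (forall F, In F (c :: prems) -> forall g, In g (gmbF F) -> In g O) ->
  linst sigmaO (Lchain prems c) = fold_right (fun F acc => fimp F acc) c prems.
Proof. induction prems; simpl; intros H.
 - apply linst_lconv. intros; apply (H c); simpl; auto.
 - unfold fimp. rewrite linst_lconv, IHprems; auto.
   + intros F [HF|HF]; apply H; simpl; auto.
   + intros; apply (H a); simpl; auto.
Qed.

Lemma leval_chain x prems c : (Forall (fun F => leval x (lconv F)) prems -> leval x (lconv c)) -> leval x (Lchain prems c).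
Proof. induction prems; simpl; intros H. apply H; constructor.
 intros [H1 H2]. apply H2. apply IHprems. intros HF. apply H. constructor; auto. Qed.
End LinCons.

Lemma mp_chain {Phi0} (tt : pform Phi0) prems c : Forall (provable tt) prems ->
  provable tt (fold_right (fun F acc => fimp F acc) c prems) -> provable tt c.
Proof. induction 1; simpl; intros H1; auto. apply IHForall. exact (Rule_MP H H1). Qed.

Lemma lin_cons {Phi0} (tt : pform Phi0) (prems : list (formula Phi0)) (c : formula Phi0) :
  Forall (provable tt) prems ->
  (forall V : gamble Phi0 -> R, Forall (evalF V) prems -> evalF V c) -> provable tt c.
Proof. intros Hp Hv.
 set (O := flat_map gmbF (c :: prems)).
 apply (mp_chain tt prems c Hp).
 rewrite <- (linst_chain O (gdef c) prems c).
 - apply Ax_Ineq. intros x. apply leval_chain. intros HF. apply leval_lconv. apply Hv.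
   rewrite Forall_forall in *. intros F HF'. apply leval_lconv. apply HF; auto.
 - intros F HF g Hg. unfold O. apply in_flat_map. eauto.
Qed.

Definition cstr := ((nat -> Z) * Z)%type.
Definition dotn (n : nat) (v : nat -> Z) (y : nat -> R) := sumR n (fun i => IZR (v i) * y i).
Definition csat n (c : cstr) y := dotn n (fst c) y >= IZR (snd c).

Definition comb (n : nat) (P Q : cstr) : cstr :=
  ((fun i => (- fst Q n) * fst P i + fst P n * fst Q i)%Z, ((- fst Q n) * snd P + fst P n * snd Q)%Z).
Definition posb n (c : cstr) := Z.ltb 0 (fst c n).
Definition negb' n (c : cstr) := Z.ltb (fst c n) 0.
Definition zerob n (c : cstr) := Z.eqb (fst c n) 0.

Definition fm (n : nat) (L : list cstr) : list cstr :=
  filter (zerob n) L ++ flat_map (fun P => map (fun Q => comb n P Q) (filter (negb' n) L)) (filter (posb n) L).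

Fixpoint fmall (k N : nat) (L : list cstr) : list cstr :=
  match N with O => L | S N => fmall k N (fm (k + N) L) end.

Definition upd (y : nat -> R) n z := fun i => if Nat.eqb i n then z else y i.

Lemma dotn_upd n v y z : dotn n v (upd y n z) = dotn n v y.
Proof. unfold dotn. apply sumR_ext. intros i Hi. unfold upd. destruct (Nat.eqb_spec i n); [lia|auto]. Qed.

Lemma dotn_lin n a b v w y : dotn n (fun i => (a * v i + b * w i)%Z) y = IZR a * dotn n v y + IZR b * dotn n w y.
Proof. unfold dotn. rewrite <- !sumR_scal, <- sumR_plus. apply sumR_ext. intros.
 rewrite plus_IZR, !mult_IZR. ring. Qed.

Lemma fold_max_ge x r : forall u, In u (x :: r) -> u <= fold_right Rmax x r.
Proof. induction r; simpl; intros u Hu. destruct Hu; [subst; lra|contradiction].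
 destruct Hu as [Hu|[Hu|Hu]].
 - subst. apply Rle_trans with (fold_right Rmax u r); [apply IHr; simpl; auto|apply Rmax_r].
 - subst. apply Rmax_l.
 - apply Rle_trans with (fold_right Rmax x r); [apply IHr; simpl; auto|apply Rmax_r].
Qed.
Lemma fold_max_in x r : In (fold_right Rmax x r) (x :: r).
Proof. induction r; simpl; auto. destruct (Rle_dec a (fold_right Rmax x r)).
 - rewrite Rmax_right by auto. simpl in IHr. destruct IHr as [H|H]; [left; auto|right; right; auto].
 - rewrite Rmax_left by lra. right; left; auto. Qed.
Lemma fold_min_le x r : forall u, In u (x :: r) -> fold_right Rmin x r <= u.
Proof. induction r; simpl; intros u Hu. destruct Hu; [subst; lra|contradiction].
 destruct Hu as [Hu|[Hu|Hu]].
 - subst. apply Rle_trans with (fold_right Rmin u r); [apply Rmin_r|apply IHr; simpl; auto].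
 - subst. apply Rmin_l.
 - apply Rle_trans with (fold_right Rmin x r); [apply Rmin_r|apply IHr; simpl; auto].
Qed.

Section Step.
Variable n : nat.
Variable L : list cstr.
Variable y : nat -> R.
Definition lo (P : cstr) := (IZR (snd P) - dotn n (fst P) y) / IZR (fst P n).

Lemma lo_le_hi P Q : (0 < fst P n)%Z -> (fst Q n < 0)%Z -> csat n (comb n P Q) y -> lo P <= lo Q.
Proof. intros HP HQ H. unfold csat, comb in H; simpl in H. rewrite dotn_lin in H.
 rewrite plus_IZR, !mult_IZR, opp_IZR in H. unfold lo.
 apply IZR_lt in HP. apply IZR_lt in HQ.
 set (a := IZR (fst P n)) in *. set (q := IZR (fst Q n)) in *.
 set (u := (IZR (snd P) - dotn n (fst P) y) / a). set (w := (IZR (snd Q) - dotn n (fst Q) y) / q).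
 assert (Eu : u * a = IZR (snd P) - dotn n (fst P) y) by (unfold u; field; lra).
 assert (Ew : w * q = IZR (snd Q) - dotn n (fst Q) y) by (unfold w; field; lra).
 assert (a * q * (u - w) >= 0) by nra.
 destruct (Rle_dec u w); auto. exfalso. assert (a * q < 0) by nra. nra.
Qed.

Lemma fm_exact : (forall c, In c (fm n L) -> csat n c y) -> exists z, forall c, In c L -> csat (S n) c (upd y n z).
Proof. intros H.
 set (los := map lo (filter (posb n) L)). set (his := map lo (filter (negb' n) L)).
 set (z := match los with x :: r => fold_right Rmax x r | nil => match his with x :: r => fold_right Rmin x r | nil => 0 end end).
 exists z. intros c Hc. unfold csat. change (dotn n (fst c) (upd y n z) + IZR (fst c n) * upd y n z n >= IZR (snd c)). rewrite dotn_upd. unfold upd at 1. rewrite Nat.eqb_refl.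
 destruct (Z.lt_trichotomy (fst c n) 0) as [Hn|[Hz|Hp]].
 -
   assert (Hz : z <= lo c).
   { unfold z. destruct los as [|x r] eqn:El.
     + assert (Hin : In (lo c) his). { apply in_map, filter_In. split; auto. unfold negb'. apply Z.ltb_lt; auto. }
       destruct his as [|x r]; [contradiction|]. apply fold_min_le; auto.
     + pose proof (fold_max_in x r) as Hm. rewrite <- El in Hm. unfold los in Hm.
       apply in_map_iff in Hm. destruct Hm as [P [HPe HP]]. rewrite filter_In in HP. destruct HP as [HP HPp].
       unfold posb in HPp. apply Z.ltb_lt in HPp. rewrite <- HPe. apply lo_le_hi; auto.
       apply H. apply in_or_app. right. apply in_flat_map. exists P. split. apply filter_In; split; auto; apply Z.ltb_lt; auto.
       apply in_map. apply filter_In. split; auto. apply Z.ltb_lt; auto. }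
   unfold lo in Hz. apply IZR_lt in Hn.
   assert (Hz' : z * IZR (fst c n) >= (IZR (snd c) - dotn n (fst c) y) / IZR (fst c n) * IZR (fst c n)) by nra.
   field_simplify in Hz'; [lra|lra].
 - assert (csat n c y). { apply H. apply in_or_app. left. apply filter_In. split; auto. unfold zerob. apply Z.eqb_eq; auto. }
   unfold csat in H0. rewrite Hz. lra.
 - assert (Hz : lo c <= z).
   { unfold z. destruct los as [|x r] eqn:El.
     + assert (Hin : In (lo c) los). { apply in_map, filter_In. split; auto. unfold posb. apply Z.ltb_lt; auto. }
       rewrite El in Hin; contradiction.
     + apply fold_max_ge. rewrite <- El. apply in_map, filter_In. split; auto. apply Z.ltb_lt; auto. }
   unfold lo in Hz. apply IZR_lt in Hp.
   assert (Hz' : z * IZR (fst c n) >= (IZR (snd c) - dotn n (fst c) y) / IZR (fst c n) * IZR (fst c n)) by nra.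
   field_simplify in Hz'; [lra|lra].
Qed.
End Step.

Lemma fmall_exact k N : forall L y, (forall c, In c (fmall k N L) -> csat k c y) ->
  exists y', (forall i, (i < k)%nat -> y' i = y i) /\ forall c, In c L -> csat (k + N) c y'.
Proof. induction N; simpl; intros L y H.
 - exists y. rewrite Nat.add_0_r. split; auto.
 - destruct (IHN _ _ H) as [y1 [Hy1 Hs1]].
   destruct (fm_exact (k + N) L y1 Hs1) as [z Hz].
   exists (upd y1 (k + N) z). split.
   + intros i Hi. unfold upd. destruct (Nat.eqb_spec i (k+N)); [lia|auto].
   + intros c Hc. rewrite Nat.add_succ_r. apply Hz; auto.
Qed.

Section Inv.
Variable Good : cstr -> Prop.
Hypothesis Good_comb : forall (a b : Z) P Q, (0 <= a)%Z -> (0 <= b)%Z -> Good P -> Good Q ->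
  Good ((fun i => a * fst P i + b * fst Q i)%Z, (a * snd P + b * snd Q)%Z).
Definition InvN n (c : cstr) := Good c /\ forall t, (n <= t)%nat -> fst c t = 0%Z.

Lemma fm_inv n L : (forall c, In c L -> InvN (S n) c) -> forall c, In c (fm n L) -> InvN n c.
Proof. intros H c Hc. apply in_app_or in Hc. destruct Hc as [Hc|Hc].
 - apply filter_In in Hc. destruct Hc as [Hc Hz]. unfold zerob in Hz. apply Z.eqb_eq in Hz.
   destruct (H c Hc) as [G1 G2]. split; auto. intros t Ht. destruct (Nat.eq_dec t n); [subst; auto|apply G2; lia].
 - apply in_flat_map in Hc. destruct Hc as [P [HP Hc]]. apply in_map_iff in Hc. destruct Hc as [Q [<- HQ]].
   apply filter_In in HP. apply filter_In in HQ. destruct HP as [HP HPp]. destruct HQ as [HQ HQn].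
   unfold posb in HPp; unfold negb' in HQn. apply Z.ltb_lt in HPp. apply Z.ltb_lt in HQn.
   destruct (H P HP) as [GP ZP]. destruct (H Q HQ) as [GQ ZQ]. split.
   + unfold comb. apply Good_comb; auto; lia.
   + intros t Ht. unfold comb; simpl. destruct (Nat.eq_dec t n). subst; ring.
     rewrite (ZP t), (ZQ t) by lia. ring.
Qed.

Lemma fmall_inv k N : forall L, (forall c, In c L -> InvN (k + N) c) -> forall c, In c (fmall k N L) -> InvN k c.
Proof. induction N; simpl; intros L H. rewrite Nat.add_0_r in H; auto.
 apply IHN. apply fm_inv. intros c Hc. rewrite <- Nat.add_succ_r. auto. Qed.
End Inv.



Definition foldT {Phi0} (V : gamble Phi0 -> R) (l : list (Z * gamble Phi0)) :=
  fold_right (fun ag acc => IZR (fst ag) * V (snd ag) + acc) 0 l.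
Lemma foldT_cons {Phi0} V (x : Z * gamble Phi0) l : foldT V (x :: l) = IZR (fst x) * V (snd x) + foldT V l.
Proof. reflexivity. Qed.
Lemma foldT_nil {Phi0} (V : gamble Phi0 -> R) : foldT V nil = 0.
Proof. reflexivity. Qed.
Lemma foldT_app {Phi0} (V : gamble Phi0 -> R) l1 l2 : foldT V (l1 ++ l2) = foldT V l1 + foldT V l2.
Proof. induction l1; [rewrite foldT_nil; simpl; lra|]. simpl app. rewrite !foldT_cons, IHl1. lra. Qed.
Lemma evalT_NE {Phi0} V (x : Z * gamble Phi0) l : evalT V (NE x l) = IZR (fst x) * V (snd x) + foldT V l.
Proof. reflexivity. Qed.
Lemma evalT_foldT {Phi0} V (t : term Phi0) : evalT V t = foldT V (ne_list t).
Proof. reflexivity. Qed.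
Lemma evalT_tadd {Phi0} V (t1 t2 : term Phi0) : evalT V (tadd t1 t2) = evalT V t1 + evalT V t2.
Proof. rewrite !evalT_foldT. unfold tadd. rewrite ne_list_app, foldT_app. auto. Qed.
Lemma evalT_tscale {Phi0} V a (t : term Phi0) : evalT V (tscale a t) = IZR a * evalT V t.
Proof. rewrite !evalT_foldT. unfold tscale. rewrite ne_list_map. induction (ne_list t).
 simpl map; rewrite !foldT_nil; lra. simpl map. rewrite !foldT_cons, IHl. simpl fst. simpl snd. rewrite mult_IZR. lra. Qed.
Lemma evalT_tneg {Phi0} V (t : term Phi0) : evalT V (tneg t) = - evalT V t.
Proof. rewrite !evalT_foldT. unfold tneg. rewrite ne_list_map. induction (ne_list t).
 simpl map; rewrite !foldT_nil; lra. simpl map. rewrite !foldT_cons, IHl. simpl fst. simpl snd. rewrite opp_IZR. lra. Qed.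
Lemma evalT_tsub {Phi0} V (t1 t2 : term Phi0) : evalT V (tsub t1 t2) = evalT V t1 - evalT V t2.
Proof. unfold tsub. rewrite evalT_tadd, evalT_tneg. lra. Qed.
Lemma evalT_e {Phi0} V (g : gamble Phi0) : evalT V (e g) = V g.
Proof. unfold e, ne_one. rewrite evalT_NE, foldT_nil. simpl fst; simpl snd. lra. Qed.

Ltac ev := unfold feq, fle, fge2 in *; simpl evalF in *;
  repeat (rewrite ?evalT_tsub, ?evalT_tadd, ?evalT_tneg, ?evalT_tscale, ?evalT_e, ?evalT_NE, ?foldT_cons, ?foldT_nil in * );
  simpl fst in *; simpl snd in *; zs.

Lemma lin1 {Phi0} {tt : pform Phi0} A c : provable tt A -> (forall V, evalF V A -> evalF V c) -> provable tt c.
Proof. intros HA H. apply (lin_cons tt (A :: nil)); [repeat constructor; auto|].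
 intros V HV. inversion HV; subst. auto. Qed.
Lemma lin3 {Phi0} {tt : pform Phi0} A B C c : provable tt A -> provable tt B -> provable tt C ->
  (forall V, evalF V A -> evalF V B -> evalF V C -> evalF V c) -> provable tt c.
Proof. intros HA HB HC H. apply (lin_cons tt (A :: B :: C :: nil)); [repeat constructor; auto|].
 intros V HV. inversion HV as [|? ? H1 HV1]; subst. inversion HV1 as [|? ? H2 HV2]; subst.
 inversion HV2 as [|? ? H3 HV3]; subst. auto. Qed.
Lemma lin4 {Phi0} {tt : pform Phi0} A B C D c : provable tt A -> provable tt B -> provable tt C -> provable tt D ->
  (forall V, evalF V A -> evalF V B -> evalF V C -> evalF V D -> evalF V c) -> provable tt c.
Proof. intros HA HB HC HD H. apply (lin_cons tt (A :: B :: C :: D :: nil)); [repeat constructor; auto|].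
 intros V HV. inversion HV as [|? ? H1 HV1]; subst. inversion HV1 as [|? ? H2 HV2]; subst.
 inversion HV2 as [|? ? H3 HV3]; subst. inversion HV3 as [|? ? H4 HV4]; subst. auto. Qed.

Section Deriv.
Context {Phi0 : Type} (tt : pform Phi0) (Htt : ptautology tt).

Definition gsumL (l : list (Z * gamble Phi0)) : gamble Phi0 :=
  fold_right (fun ag acc => gadd (gscale (fst ag) (snd ag)) acc) (gterm 0 tt) l.

Lemma gvalu_gsumL u l : gvalu u (gsumL l) = fold_right (fun ag acc => IZR (fst ag) * gvalu u (snd ag) + acc) 0 l.
Proof. induction l; simpl. rewrite gvalu_term. lra. unfold gsumL in *; simpl. rewrite gvalu_add, gvalu_scale, IHl. auto. Qed.

Lemma e_scale (a : Z) g : (0 <= a)%Z ->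
  provable tt (FGe (NE (1%Z, gscale a g) (((-a)%Z, g) :: nil)) 0) /\
  provable tt (FGe (NE ((-1)%Z, gscale a g) ((a, g) :: nil)) 0).
Proof. intros Ha.
 pose proof (Ax_E7 tt 0%Z g Ha) as H7.
 assert (H5a : provable tt (fge2 (e (gscale a g)) (e (gadd (gscale a g) (gterm 0 tt))))).
 { apply Ax_E5. intros W pi w. rewrite !gval_gvalu, gvalu_add, gvalu_term. lra. }
 assert (H5b : provable tt (fge2 (e (gadd (gscale a g) (gterm 0 tt))) (e (gscale a g)))).
 { apply Ax_E5. intros W pi w. rewrite !gval_gvalu, gvalu_add, gvalu_term. lra. }
 split; apply (lin3 _ _ _ _ H7 H5a H5b); intros V HA HB HC;
 ev; lra.
Qed.

Lemma super l b : (forall ag, In ag l -> (0 <= fst ag)%Z) ->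
  provable tt (FGe (NE (1%Z, gadd (gsumL l) (gterm b tt)) (map (fun ag : Z * gamble Phi0 => ((- fst ag)%Z, snd ag)) l)) b).
Proof. induction l as [|[m h] l IH]; intros Hl.
 - assert (H7 : provable tt (feq (tsub (e (gadd (gterm 0 tt) (gterm b tt))) (tscale 0 (e (gterm 0 tt)))) b))
     by exact (Ax_E7 tt b (gterm 0 tt) (Z.le_refl 0)).
   apply (lin1 _ _ H7). intros V HA.
   ev. lra.
 - assert (Hm : (0 <= m)%Z) by (apply (Hl (m, h)); simpl; auto).
   specialize (IH (fun ag H => Hl ag (or_intror H))).
   destruct (e_scale m h Hm) as [Hs _].
   pose proof (Ax_E6 tt (gscale m h) (gadd (gsumL l) (gterm b tt))) as H6.
   assert (H5 : provable tt (fge2 (e (gadd (gsumL ((m, h) :: l)) (gterm b tt))) (e (gadd (gscale m h) (gadd (gsumL l) (gterm b tt)))))).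
   { apply Ax_E5. intros W pi w. rewrite !gval_gvalu. unfold gsumL; simpl. rewrite !gvalu_add. lra. }
   apply (lin4 _ _ _ _ _ IH Hs H6 H5). intros V HA HB HC HD.
   ev. lra.
Qed.

Definition mkterm (gd : gamble Phi0) (l : list (Z * gamble Phi0)) : term Phi0 :=
  match l with nil => NE (0%Z, gd) nil | x :: r => NE x r end.

Lemma evalT_mkterm V gd l : evalT V (mkterm gd l) = fold_right (fun ag acc => IZR (fst ag) * V (snd ag) + acc) 0 l.
Proof. destruct l; unfold evalT; simpl; auto. lra. Qed.

Lemma fold_shift (F : nat -> R) l c : fold_right (fun i acc => F i + acc) c l = fold_right (fun i acc => F i + acc) 0 l + c.
Proof. induction l; simpl; [lra|rewrite IHl; lra]. Qed.

Lemma fold_seq (F : nat -> R) k : fold_right (fun i acc => F i + acc) 0 (seq 0 k) = sumR k F.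
Proof. induction k; [reflexivity|]. rewrite seq_S, fold_right_app, fold_shift, IHk.
 simpl. lra. Qed.

Definition termw (gl : nat -> gamble Phi0) (k : nat) (v : nat -> Z) : term Phi0 :=
  mkterm (gl 0%nat) (map (fun i => (v i, gl i)) (seq 0 k)).

Lemma evalT_termw V gl k v : evalT V (termw gl k v) = sumR k (fun i => IZR (v i) * V (gl i)).
Proof. unfold termw. rewrite evalT_mkterm, <- fold_seq. generalize (seq 0 k); intros l.
 induction l; simpl; auto. rewrite IHl; auto. Qed.

Lemma fold_map_seq (G : nat -> Z) (H : nat -> gamble Phi0) (Vf : gamble Phi0 -> R) k :
  fold_right (fun ag acc => IZR (fst ag) * Vf (snd ag) + acc) 0 (map (fun i => (G i, H i)) (seq 0 k))
  = sumR k (fun i => IZR (G i) * Vf (H i)).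
Proof. rewrite <- fold_seq. generalize (seq 0 k); intros l. induction l; simpl; auto. rewrite IHl; auto. Qed.

Lemma coh_prov (gl : nat -> gamble Phi0) (k : nat) (v : nat -> Z) (b : Z) (j : nat) :
  (j < k)%nat -> (forall i, (i < k)%nat -> i <> j -> (v i <= 0)%Z) ->
  (forall u : Phi0 -> bool, sumR k (fun i => IZR (v i) * gvalu u (gl i)) >= IZR b) ->
  provable tt (FGe (termw gl k v) b).
Proof. intros Hj Hs Hu.
 set (mu_ i := if Nat.eqb i j then (if Z.ltb (v j) 0 then (- v j)%Z else 0%Z) else (- v i)%Z).
 set (c := if Z.ltb (v j) 0 then 0%Z else v j).
 assert (Hmu : forall i, (i < k)%nat -> (0 <= mu_ i)%Z).
 { intros i Hi. unfold mu_. destruct (Nat.eqb_spec i j). destruct (Z.ltb_spec (v j) 0); lia.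
   specialize (Hs i Hi n). lia. }
 assert (Hc : (0 <= c)%Z) by (unfold c; destruct (Z.ltb_spec (v j) 0); lia).
 assert (Hv : forall i, IZR (v i) = - IZR (mu_ i) + (if Nat.eqb i j then IZR c else 0)).
 { intros i. unfold mu_, c. destruct (Nat.eqb_spec i j). subst. destruct (Z.ltb_spec (v j) 0); rewrite ?opp_IZR; simpl; lra.
   rewrite opp_IZR. lra. }
 assert (Hsum : forall Vf : nat -> R, sumR k (fun i => IZR (v i) * Vf i) = - sumR k (fun i => IZR (mu_ i) * Vf i) + IZR c * Vf j).
 { intros Vf. rewrite (sumR_ext k _ (fun i => -1 * (IZR (mu_ i) * Vf i) + (if Nat.eqb i j then IZR c * Vf i else 0))).
   rewrite sumR_plus, sumR_scal, sumR_delta; auto. lra.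
   intros i _. rewrite Hv. destruct (Nat.eqb i j); lra. }
 set (lm := map (fun i => (mu_ i, gl i)) (seq 0 k)).
 set (H1 := gadd (gsumL lm) (gterm b tt)).
 set (H2 := gscale c (gl j)).
 assert (P1 : provable tt (fge2 (e H2) (e H1))).
 { apply Ax_E5. intros W pi w. rewrite !gval_gvalu. unfold H1, H2. rewrite gvalu_add, gvalu_scale, gvalu_term, gvalu_gsumL.
   rewrite Htt. unfold lm. rewrite fold_map_seq. specialize (Hu (pi w)). rewrite Hsum in Hu. lra. }
 assert (P2 := super lm b).
 assert (P2' : provable tt (FGe (NE (1%Z, H1) (map (fun ag : Z * gamble Phi0 => ((- fst ag)%Z, snd ag)) lm)) b)).
 { apply P2. intros ag Hag. unfold lm in Hag. apply in_map_iff in Hag. destruct Hag as [i [<- Hi]].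
   apply in_seq in Hi. simpl. apply Hmu. lia. }
 destruct (e_scale c (gl j) Hc) as [_ P3].
 apply (lin3 _ _ _ _ P1 P2' P3). intros V HA HB HC.
 unfold fge2 in *. simpl evalF in *. rewrite evalT_termw.
 unfold evalT in *. simpl in *. zs.
 assert (Em : fold_right (fun ag acc => IZR (fst ag) * V (snd ag) + acc) 0 (map (fun ag : Z * gamble Phi0 => ((- fst ag)%Z, snd ag)) lm) = - sumR k (fun i => IZR (mu_ i) * V (gl i))).
 { unfold lm. rewrite map_map. simpl. rewrite <- fold_seq.
   generalize (seq 0 k); intros l; induction l; simpl; [lra|]. rewrite IHl, opp_IZR. lra. }
 rewrite Em in *. rewrite (Hsum (fun i => V (gl i))). unfold H2 in *. lra.
Qed.
End Deriv.

Lemma foldT_ext {Phi0} (V V' : gamble Phi0 -> R) l : (forall g, In g (map snd l) -> V g = V' g) -> foldT V l = foldT V' l.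
Proof. induction l; intros H; auto. rewrite !foldT_cons. simpl in H.
 rewrite (H (snd a)) by (left; auto). rewrite IHl by (intros; apply H; right; auto). auto. Qed.

Lemma evalF_ext {Phi0} (V V' : gamble Phi0 -> R) F : (forall g, In g (gmbF F) -> V g = V' g) -> (evalF V F <-> evalF V' F).
Proof. induction F; intros H.
 - change (evalT V t >= IZR z <-> evalT V' t >= IZR z). rewrite !evalT_foldT.
   rewrite (foldT_ext V V' (ne_list t)); [tauto|]. exact H.
 - simpl. rewrite IHF; auto; tauto.
 - simpl in *. rewrite IHF1, IHF2; try tauto; intros; apply H; apply in_or_app; auto.
Qed.

Lemma gdef_in {Phi0} (F : formula Phi0) : In (gdef F) (gmbF F).
Proof. induction F as [t b|F IH|F1 IH1 F2 IH2]; simpl. destruct t; simpl; auto. auto. apply in_or_app; auto. Qed.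

Section Compl.
Context {Phi0 : Type} (tt : pform Phi0) (Htt : ptautology tt) (f : formula Phi0).

Definition gs := gmbF f.
Definition kcount := length gs.
Definition g0 := gdef f.
Definition gl (i : nat) := nth i gs g0.
Definition Phi := flat_map gpf gs.
Definition pv (u : Phi0 -> bool) := map (fun p => peval u p) Phi.

Definition pick (beta : list bool) : list (Phi0 -> bool) :=
  match excluded_middle_informative (exists u, pv u = beta) with
  | left H => proj1_sig (constructive_indefinite_description _ H) :: nil
  | right _ => nil end.
Definition vals := flat_map pick (allbools (length Phi)).
Definition nvals := length vals.
Definition v0 : Phi0 -> bool := fun _ => true.
Definition va (a : nat) := nth a vals v0.

Lemma k_pos : (0 < kcount)%nat.
Proof. unfold kcount, gs. destruct (gmbF f) eqn:E. pose proof (gdef_in f). rewrite E in H. contradiction. simpl; lia. Qed.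

Lemma vals_cover u : exists a, (a < nvals)%nat /\ pv (va a) = pv u.
Proof.
 assert (Hin : exists w, In w vals /\ pv w = pv u).
 { unfold vals. assert (Hb : In (pv u) (allbools (length Phi))).
   { unfold pv. rewrite <- (length_map (fun p => peval u p) Phi). apply allbools_in. }
   unfold pick. set (beta := pv u) in *.
   destruct (excluded_middle_informative (exists u0, pv u0 = beta)) as [H|H] eqn:E.
   - exists (proj1_sig (constructive_indefinite_description _ H)). split.
     + apply in_flat_map. exists beta. split; auto. unfold pick. rewrite E. simpl; auto.
     + apply (proj2_sig (constructive_indefinite_description _ H)).
   - exfalso; apply H; exists u; auto. }
 destruct Hin as [w [Hw Hp]]. destruct (In_nth vals w v0 Hw) as [a [Ha Hn]].
 exists a. split; auto. unfold va. rewrite Hn; auto.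
Qed.

Lemma N_pos : (0 < nvals)%nat.
Proof. destruct (vals_cover v0) as [a [Ha _]]. lia. Qed.

Lemma gpf_Phi i : (i < kcount)%nat -> incl (gpf (gl i)) Phi.
Proof. intros Hi p Hp. unfold Phi. apply in_flat_map. exists (gl i). split; auto. apply nth_In. auto. Qed.

Lemma gvalu_pv u u' i : (i < kcount)%nat -> pv u = pv u' -> gvalu u (gl i) = gvalu u' (gl i).
Proof. intros Hi H. apply gvalu_ext. intros p Hp. apply (map_eq_in _ _ Phi p H). apply (gpf_Phi i Hi); auto. Qed.

Definition gZ (u : Phi0 -> bool) (g : gamble Phi0) : Z :=
  fold_right (fun bp acc => (fst bp * (if peval u (snd bp) then 1 else 0) + acc)%Z) 0%Z (ne_list g).
Lemma gZ_gvalu u g : IZR (gZ u g) = gvalu u g.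
Proof. unfold gZ, gvalu. induction (ne_list g); simpl; auto. rewrite plus_IZR, mult_IZR, IHl.
 destruct (peval u (snd a)); simpl; lra. Qed.

Definition GZ i a := gZ (va a) (gl i).
Definition Gr i a := gvalu (va a) (gl i).
Lemma GZ_Gr i a : IZR (GZ i a) = Gr i a.
Proof. apply gZ_gvalu. Qed.

Definition blk (al be : nat -> Z) : nat -> Z :=
  fun t => if Nat.ltb t kcount then al t else if Nat.ltb t (kcount + nvals) then be (t - kcount)%nat else 0%Z.
Definition ci i : cstr := (blk (fun t => if Nat.eqb t i then (-1)%Z else 0%Z) (fun a => GZ i a), 0%Z).
Definition cj j : cstr := (blk (fun t => if Nat.eqb t j then 1%Z else 0%Z) (fun a => (- GZ j a)%Z), 0%Z).
Definition pa a : cstr := (blk (fun _ => 0%Z) (fun a' => if Nat.eqb a' a then 1%Z else 0%Z), 0%Z).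
Definition s1 : cstr := (blk (fun _ => 0%Z) (fun _ => 1%Z), 1%Z).
Definition s2 : cstr := (blk (fun _ => 0%Z) (fun _ => (-1)%Z), (-1)%Z).
Definition Lj j : list cstr := cj j :: s1 :: s2 :: map ci (seq 0 kcount) ++ map pa (seq 0 nvals).

Lemma blk_lo al be t : (t < kcount)%nat -> blk al be t = al t.
Proof. intros H. unfold blk. destruct (Nat.ltb_spec t kcount); [auto|lia]. Qed.
Lemma blk_hi al be a : (a < nvals)%nat -> blk al be (kcount + a)%nat = be a.
Proof. intros H. unfold blk. destruct (Nat.ltb_spec (kcount+a) kcount); [lia|].
 destruct (Nat.ltb_spec (kcount+a) (kcount+nvals)); [|lia]. f_equal; lia. Qed.
Lemma blk_out al be t : (kcount + nvals <= t)%nat -> blk al be t = 0%Z.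
Proof. intros H. unfold blk. destruct (Nat.ltb_spec t kcount); [lia|]. destruct (Nat.ltb_spec t (kcount+nvals)); [lia|auto]. Qed.

Lemma dot_blk al be y : dotn (kcount + nvals) (blk al be) y = sumR kcount (fun t => IZR (al t) * y t) + sumR nvals (fun a => IZR (be a) * y (kcount + a)%nat).
Proof. unfold dotn. rewrite sumR_add. f_equal.
 - apply sumR_ext. intros; rewrite blk_lo; auto.
 - apply sumR_ext. intros; rewrite blk_hi; auto.
Qed.

Definition Good j (c : cstr) :=
  (forall i, (i < kcount)%nat -> i <> j -> (fst c i <= 0)%Z) /\
  forall a, (a < nvals)%nat -> IZR (fst c (kcount + a)%nat) >= IZR (snd c) - sumR kcount (fun i => IZR (fst c i) * Gr i a).

Lemma Good_comb j : forall (a b : Z) P Q, (0 <= a)%Z -> (0 <= b)%Z -> Good j P -> Good j Q ->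
  Good j ((fun i => a * fst P i + b * fst Q i)%Z, (a * snd P + b * snd Q)%Z).
Proof. intros a b P Q Ha Hb [P1 P2] [Q1 Q2]. split; simpl.
 - intros i Hi Hij. specialize (P1 i Hi Hij). specialize (Q1 i Hi Hij). nia.
 - intros x Hx. specialize (P2 x Hx). specialize (Q2 x Hx).
   rewrite (sumR_ext kcount _ (fun i => IZR a * (IZR (fst P i) * Gr i x) + IZR b * (IZR (fst Q i) * Gr i x))).
   + rewrite sumR_plus, !sumR_scal. rewrite !plus_IZR, !mult_IZR.
     apply IZR_le in Ha. apply IZR_le in Hb. nra.
   + intros i _. rewrite plus_IZR, !mult_IZR. ring.
Qed.

Lemma Good_blk j al be b : (forall i, (i < kcount)%nat -> i <> j -> (al i <= 0)%Z) ->
  (forall a, (a < nvals)%nat -> IZR (be a) >= IZR b - sumR kcount (fun i => IZR (al i) * Gr i a)) ->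
  InvN (Good j) (kcount + nvals) (blk al be, b).
Proof. intros H1 H2. split; [split|].
 - intros i Hi Hij. simpl. rewrite blk_lo; auto.
 - intros a Ha. simpl. rewrite blk_hi by auto.
   rewrite (sumR_ext kcount _ (fun i => IZR (al i) * Gr i a)) by (intros; rewrite blk_lo; auto). auto.
 - intros t Ht. simpl. apply blk_out; auto.
Qed.

Lemma Lj_inv j : (j < kcount)%nat -> forall c, In c (Lj j) -> InvN (Good j) (kcount + nvals) c.
Proof. intros Hj c Hc. unfold Lj in Hc. simpl in Hc. destruct Hc as [<-|[<-|[<-|Hc]]].
 - apply Good_blk. intros i Hi Hij. destruct (Nat.eqb_spec i j); [lia|lia].
   intros a Ha. rewrite (sumR_ext kcount _ (fun i => if Nat.eqb i j then Gr i a else 0)).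
   rewrite sumR_delta by auto. rewrite opp_IZR, GZ_Gr. lra.
   intros i _. destruct (Nat.eqb i j); simpl; lra.
 - apply Good_blk. intros; lia. intros a Ha. rewrite (sumR_ext kcount _ (fun _ => 0)), sumR_0. lra. intros; simpl; lra.
 - apply Good_blk. intros; lia. intros a Ha. rewrite (sumR_ext kcount _ (fun _ => 0)), sumR_0. lra. intros; simpl; lra.
 - apply in_app_or in Hc. destruct Hc as [Hc|Hc]; apply in_map_iff in Hc; destruct Hc as [i [<- Hi]]; apply in_seq in Hi.
   + apply Good_blk. intros i' _ _. destruct (Nat.eqb i' i); lia.
     intros a Ha. rewrite (sumR_ext kcount _ (fun t => if Nat.eqb t i then - Gr t a else 0)).
     rewrite sumR_delta by lia. rewrite GZ_Gr. lra.
     intros t _. destruct (Nat.eqb t i); simpl; lra.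
   + apply Good_blk. intros; lia. intros a Ha. rewrite (sumR_ext kcount _ (fun _ => 0)), sumR_0.
     destruct (Nat.eqb a i); simpl; lra. intros; simpl; lra.
Qed.

Lemma final_ineq j c : (j < kcount)%nat -> In c (fmall kcount nvals (Lj j)) ->
  Good j c /\ forall a, (a < nvals)%nat -> sumR kcount (fun i => IZR (fst c i) * Gr i a) >= IZR (snd c).
Proof. intros Hj Hc. destruct (fmall_inv (Good j) (Good_comb j) kcount nvals (Lj j) (Lj_inv j Hj) c Hc) as [HG HZ].
 split; auto. intros a Ha. destruct HG as [_ H2]. specialize (H2 a Ha). rewrite HZ in H2 by lia. simpl in H2. lra. Qed.

Definition SS := flat_map (fun j => fmall kcount nvals (Lj j)) (seq 0 kcount).
Definition prems := map (fun c : cstr => FGe (termw gl kcount (fst c)) (snd c)) SS.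

Lemma prems_prov : Forall (provable tt) prems.
Proof. apply Forall_forall. intros F HF. unfold prems in HF. apply in_map_iff in HF. destruct HF as [c [<- Hc]].
 unfold SS in Hc. apply in_flat_map in Hc. destruct Hc as [j [Hj Hc]]. apply in_seq in Hj.
 destruct (final_ineq j c) as [[HG1 _] HF]; auto; try lia.
 apply (coh_prov tt Htt gl kcount (fst c) (snd c) j); auto; try lia.
 intros u. destruct (vals_cover u) as [a [Ha Hp]]. specialize (HF a Ha).
 rewrite (sumR_ext kcount _ (fun i => IZR (fst c i) * Gr i a)); auto.
 intros i Hi. unfold Gr. rewrite (gvalu_pv (va a) u i); auto.
Qed.
End Compl.

Section Model.
Context {Phi0 : Type} (tt : pform Phi0) (Htt : ptautology tt) (f : formula Phi0).
Variable V : gamble Phi0 -> R.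
Hypothesis HV : Forall (evalF V) (prems f).

Local Notation k := (kcount f).
Local Notation NN := (nvals f).
Definition x (i : nat) := V (gl f i).

Lemma HVc j c : (j < k)%nat -> In c (fmall k NN (Lj f j)) -> csat k c x.
Proof. intros Hj Hc. rewrite Forall_forall in HV.
 assert (H : evalF V (FGe (termw (gl f) k (fst c)) (snd c))).
 { apply HV. unfold prems. apply in_map_iff. exists c. split; auto. unfold SS. apply in_flat_map.
   exists j. split; auto. apply in_seq. lia. }
 simpl in H. rewrite evalT_termw in H. exact H. Qed.

Definition Ypred j (y : nat -> R) := (forall i, (i < k)%nat -> y i = x i) /\ forall c, In c (Lj f j) -> csat (k + NN) c y.
Definition Yj j := epsilon (inhabits (fun _ : nat => 0)) (Ypred j).
Lemma Yspec j : (j < k)%nat -> (forall i, (i < k)%nat -> Yj j i = x i) /\ forall c, In c (Lj f j) -> csat (k + NN) c (Yj j).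
Proof. intros Hj. unfold Yj. apply (epsilon_spec (inhabits (fun _ : nat => 0)) (Ypred j)).
 apply (fmall_exact k NN (Lj f j) x). intros c Hc. apply (HVc j c Hj Hc). Qed.

Lemma Y_pa j a : (j < k)%nat -> (a < NN)%nat -> 0 <= Yj j (k + a)%nat.
Proof. intros Hj Ha. destruct (Yspec j Hj) as [_ H]. specialize (H (pa f a)).
 assert (In (pa f a) (Lj f j)) by (unfold Lj; right; right; right; apply in_or_app; right; apply in_map, in_seq; lia).
 specialize (H H0). unfold csat, pa in H. simpl in H. rewrite dot_blk in H.
 rewrite (sumR_ext k _ (fun _ => 0)), sumR_0 in H by (intros; simpl; lra).
 rewrite (sumR_ext NN _ (fun a' => if Nat.eqb a' a then Yj j (k + a')%nat else 0)), sumR_delta in H by (auto; intros a' _; destruct (Nat.eqb a' a); simpl; lra).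
 lra. Qed.

Lemma Y_sum j : (j < k)%nat -> sumR NN (fun a => Yj j (k + a)%nat) = 1.
Proof. intros Hj. destruct (Yspec j Hj) as [_ H].
 assert (H1 := H (s1 f)). assert (H2 := H (s2 f)).
 assert (I1 : In (s1 f) (Lj f j)) by (unfold Lj; simpl; auto).
 assert (I2 : In (s2 f) (Lj f j)) by (unfold Lj; simpl; auto).
 specialize (H1 I1). specialize (H2 I2). unfold csat, s1, s2 in *. simpl in H1, H2.
 rewrite dot_blk in H1, H2.
 rewrite (sumR_ext k _ (fun _ => 0)), sumR_0 in H1 by (intros; simpl; lra).
 rewrite (sumR_ext k _ (fun _ => 0)), sumR_0 in H2 by (intros; simpl; lra).
 rewrite (sumR_ext NN _ (fun a => Yj j (k + a)%nat)) in H1 by (intros; simpl; lra).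
 rewrite sumR_scal in H2.
 lra. Qed.

Lemma Y_ge j i : (j < k)%nat -> (i < k)%nat -> sumR NN (fun a => Yj j (k + a)%nat * Gr f i a) >= x i.
Proof. intros Hj Hi. destruct (Yspec j Hj) as [HY H].
 assert (I1 : In (ci f i) (Lj f j)) by (unfold Lj; right; right; right; apply in_or_app; left; apply in_map, in_seq; lia).
 specialize (H _ I1). unfold csat, ci in H. simpl in H. rewrite dot_blk in H.
 rewrite (sumR_ext k _ (fun t => if Nat.eqb t i then - Yj j t else 0)), sumR_delta in H by (auto; intros t _; destruct (Nat.eqb t i); simpl; lra).
 rewrite (sumR_ext NN _ (fun a => Yj j (k + a)%nat * Gr f i a)) in H by (intros; rewrite GZ_Gr; lra).
 rewrite HY in H by auto. lra. Qed.

Lemma Y_le j : (j < k)%nat -> sumR NN (fun a => Yj j (k + a)%nat * Gr f j a) <= x j.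
Proof. intros Hj. destruct (Yspec j Hj) as [HY H].
 assert (I1 : In (cj f j) (Lj f j)) by (unfold Lj; simpl; auto).
 specialize (H _ I1). unfold csat, cj in H. simpl in H. rewrite dot_blk in H.
 rewrite (sumR_ext k _ (fun t => if Nat.eqb t j then Yj j t else 0)), sumR_delta in H by (auto; intros t _; destruct (Nat.eqb t j); simpl; lra).
 rewrite (sumR_ext NN _ (fun a => -1 * (Yj j (k + a)%nat * Gr f j a))), sumR_scal in H by (intros; rewrite opp_IZR, GZ_Gr; lra).
 rewrite HY in H by auto. lra. Qed.

Definition p j a := if Nat.ltb j k then Yj j (k + a)%nat else if Nat.eqb a 0 then 1 else 0.

Lemma p_nonneg j a : (a < NN)%nat -> 0 <= p j a.
Proof. intros Ha. unfold p. destruct (Nat.ltb_spec j k). apply Y_pa; auto. destruct (Nat.eqb a 0); lra. Qed.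
Lemma p_sum j : sumR NN (p j) = 1.
Proof. unfold p. destruct (Nat.ltb_spec j k). apply Y_sum; auto.
 exact (sumR_delta NN 0 (fun _ => 1) (N_pos f)). Qed.

Definition ind (A : nat -> Prop) (a : nat) : R := if excluded_middle_informative (A a) then 1 else 0.
Definition muj j (A : nat -> Prop) : R := sumR NN (fun a => p j a * ind A a).

Definition Fall : algebra nat :=
  {| alg_mem := fun _ => True; alg_ext := fun _ _ _ _ => I; alg_full := I; alg_compl := fun _ _ => I;
     alg_union := fun _ _ _ _ => I |}.

Lemma muj_ext j A B : seteq A B -> muj j A = muj j B.
Proof. intros H. unfold muj. apply sumR_ext. intros a _. unfold ind.
 destruct (excluded_middle_informative (A a)), (excluded_middle_informative (B a)); auto;
 exfalso; firstorder. Qed.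
Lemma muj_full j : muj j (fun _ => True) = 1.
Proof. unfold muj. rewrite <- (p_sum j). apply sumR_ext. intros. unfold ind.
 destruct (excluded_middle_informative True); [lra|tauto]. Qed.
Lemma muj_nonneg j A : alg_mem Fall A -> 0 <= muj j A.
Proof. intros _. unfold muj. rewrite <- (sumR_0 NN). apply sumR_le. intros a Ha.
 unfold ind. destruct (excluded_middle_informative (A a)); pose proof (p_nonneg j a Ha); nra. Qed.
Lemma muj_add j A B : alg_mem Fall A -> alg_mem Fall B -> (forall w, A w -> B w -> False) ->
  muj j (fun w => A w \/ B w) = muj j A + muj j B.
Proof. intros _ _ H. unfold muj. rewrite <- sumR_plus. apply sumR_ext. intros a _. unfold ind.
 destruct (excluded_middle_informative (A a \/ B a)), (excluded_middle_informative (A a)), (excluded_middle_informative (B a));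
 try lra; firstorder. Qed.

Definition mkP j : prob_measure Fall :=
  {| mu := muj j; mu_ext := muj_ext j; mu_full := muj_full j; mu_nonneg := muj_nonneg j; mu_add := muj_add j |}.

Lemma lpP_ne : exists P : prob_measure Fall, exists j, (j < k)%nat /\ forall A, mu P A = muj j A.
Proof. exists (mkP 0). exists 0%nat. split; auto. apply k_pos. Qed.

Definition Mx : lp_structure Phi0 nat :=
  {| lp_W_ne := inhabits 0%nat; lp_F := Fall;
     lp_P := fun P => exists j, (j < k)%nat /\ forall A, mu P A = muj j A;
     lp_P_ne := lpP_ne; lp_pi := va f; lp_pi_meas := fun _ => I |}.

Lemma EX_Mx P j X : (forall A, mu P A = muj j A) -> determined Mx (Phi f) X ->
  EX Mx (Phi f) P X = sumR NN (fun a => p j a * X a).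
Proof. intros HP HX. unfold EX. set (pt := pat Mx (Phi f)).
 rewrite (sumL_ext _ _ (fun beta => sumR NN (fun a => p j a * ind (fun w => pt w = beta) a * X (rep Mx (Phi f) beta)))).
 2:{ intros beta _. rewrite HP. unfold muj. rewrite Rmult_comm, <- sumR_scal. apply sumR_ext. intros; lra. }
 rewrite sumL_sumR. apply sumR_ext. intros a Ha.
 rewrite (sumL_ext _ _ (fun beta => if list_eq_dec Bool.bool_dec beta (pt a) then p j a * X (rep Mx (Phi f) beta) else 0)).
 - rewrite (sumL_delta (list_eq_dec Bool.bool_dec)).
   + f_equal. apply HX. apply rep_pat.
   + apply allbools_nodup.
   + apply pat_in.
 - intros beta _. unfold ind. destruct (excluded_middle_informative (pt a = beta)), (list_eq_dec Bool.bool_dec beta (pt a));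
   subst; try congruence; lra.
Qed.

Lemma LE_Mx i : (i < k)%nat -> LE Mx (gl f i) = x i.
Proof. intros Hi. symmetry. eapply inf_unique; [|apply (LE_char Mx (Phi f)); apply gpf_Phi; auto].
 assert (Hd : determined Mx (Phi f) (gsem Mx (gl f i))) by (apply determined_g; apply gpf_Phi; auto).
 split.
 - intros ex [P [[j [Hj HP]] ->]]. rewrite (EX_Mx P j _ HP Hd).
   rewrite (sumR_ext NN _ (fun a => Yj j (k + a)%nat * Gr f i a)).
   apply Rge_le, Y_ge; auto.
   intros a _. unfold p. destruct (Nat.ltb_spec j k); [|lia]. reflexivity.
 - intros m Hm. apply Rle_trans with (EX Mx (Phi f) (mkP i) (gsem Mx (gl f i))).
   + apply Hm. exists (mkP i). split; auto. exists i; split; auto.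
   + rewrite (EX_Mx (mkP i) i _ (fun A => eq_refl) Hd).
     rewrite (sumR_ext NN _ (fun a => Yj i (k + a)%nat * Gr f i a)). apply Y_le; auto.
     intros a _. unfold p. destruct (Nat.ltb_spec i k); [|lia]. reflexivity.
Qed.

Lemma model_eval : lp_valid f -> evalF V f.
Proof. intros Hv. specialize (Hv nat Mx). apply sat_evalF in Hv.
 apply (evalF_ext (LE Mx) V f); auto. intros g Hg.
 destruct (In_nth (gmbF f) g (g0 f) Hg) as [i [Hi <-]].
 change (nth i (gmbF f) (g0 f)) with (gl f i). rewrite LE_Mx; auto. Qed.
End Model.

Theorem completeness {Phi0} (tt : pform Phi0) (Htt : ptautology tt) f : lp_valid f -> provable tt f.
Proof. intros Hv. apply (lin_cons tt (prems f)).
 - apply prems_prov; auto.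
 - intros V HV. apply (model_eval f V HV Hv).
Qed.


Theorem theorem5p2 (Phi0 : Type) (tt : pform Phi0) (Htt : ptautology tt)
  (f : formula Phi0) : provable tt f <-> lp_valid f.
Proof. split.
 - intros H W M. apply sat_evalF. apply (soundness_eval tt Htt f H).
 - apply completeness; auto.
Qed.
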